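(* Let $\mathcal G$ be a grid and $\delta<c(\mathcal G)/2$. Let $A_+=\mathbb{R}^n\setminus\{\vec a:\mathsf M^{\mathcal G_+}_\delta(\vec a)\neq\vec a\}$ and $A_-=\mathbb{R}^n\setminus(\{\vec a:\mathsf M^{\mathcal G_-}_\delta(\vec a)\neq\vec a\}\cup\mathrm{Grid}_{\mathcal G})$, viewed as subposets with inclusions $\iota_\pm:A_\pm\hookrightarrow\mathbb{R}^n$. Then for every finitely presented $n$-parameter persistence module $M$, $$\mathsf M^{\mathcal G_+}_\delta(M)\cong\mathrm{Lan}_{\iota_+}(M\circ\iota_+),\qquad \mathsf M^{\mathcal G_-}_\delta(M)\cong\mathrm{Ran}_{\iota_-}(M\circ\iota_-),$$ the left Kan extension along $\iota_+$ and the right Kan extension along $\iota_-$ respectively.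
   Context: Modules are functors $(\mathbb{R}^n,\leq)\to$ finite-dimensional vector spaces, equivalently $\mathbb{R}^n$-graded modules over the monoid ring $P_n$ of $([0,\infty)^n,+)$; finitely presented means cokernel of a map of finitely generated free graded modules. A grid is $\mathcal G=\prod_i\mathcal G^i$, $\mathcal G^i:[k_i]\to\mathbb{R}$, with controlling constant $c(\mathcal G)=\min\{\|\vec a-\vec b\|_\infty:\vec a\neq\vec b\in\mathrm{Im}\,\mathcal G\}$, and $\mathrm{Grid}_{\mathcal G}=\{\vec a\in\mathbb{R}^n:a_j\in\mathrm{Im}\,\mathcal G^j\text{ for some }j\}$. One-sided merge functions act coordinatewise: $\mathsf M^{\mathcal G_+}_\delta$ sends $x\in[\mathcal G^i(k)-\delta,\mathcal G^i(k)]$ to $\mathcal G^i(k)$ and fixes other $x$; $\mathsf M^{\mathcal G_-}_\delta$ sends $x\in[\mathcal G^i(k),\mathcal G^i(k)+\delta]$ to $\mathcal G^i(k)$ and fixes other $x$. Both are order preserving. For $\mathsf F\in\{\mathsf M^{\mathcal G_+}_\delta,\mathsf M^{\mathcal G_-}_\delta\}$ and a presentation $F_1\xrightarrow{p_1}F_0\to M$, $\mathsf F(M)$ is the cokernel of the map obtained by replacing each generator grade $\vec g$ by $\mathsf F(\vec g)$ and each monomial $\vec x^{\vec r-\vec b}$ in $p_1$ by $\vec x^{\mathsf F(\vec r)-\mathsf F(\vec b)}$. *)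

(* Defs.v *)
From HB Require Import structures.
From mathcomp Require Import all_boot all_order all_algebra.
From mathcomp Require Import reals.
Set Implicit Arguments. Unset Strict Implicit. Unset Printing Implicit Defensive.
Import Order.TTheory GRing.Theory Num.Theory.
Local Open Scope ring_scope.

Section Functors0.
Variable K : fieldType.

Definition lin (U V : lmodType K) (f : U -> V) : Prop :=
  forall (c : K) (u v : U), f (c *: u + v) = c *: f u + f v.

Record pfunctor (T : Type) (le : T -> T -> Prop) := PFunctor {
  fsp : T -> lmodType K;
  fmap : forall s t, le s t -> fsp s -> fsp t;
  fmap_lin : forall s t (h : le s t), lin (fmap h);
  fmap_id : forall s (h : le s s) v, fmap h v = v;
  fmap_comp : forall s t u (h1 : le s t) (h2 : le t u) (h3 : le s u) v,
      fmap h3 v = fmap h2 (fmap h1 v) }.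
End Functors0.
Arguments fmap {K T le} p {s t} _ _.
Arguments fsp {K T le} p _.
Section Functors.
Variable K : fieldType.

Definition restrict (S T : Type) (leS : S -> S -> Prop) (leT : T -> T -> Prop)
  (f : S -> T) (mono : forall s s', leS s s' -> leT (f s) (f s'))
  (F : pfunctor K leT) : pfunctor K leS.
Proof.
refine (@PFunctor K S leS (fun s => fsp F (f s))
          (fun s s' h => fmap F (mono s s' h)) _ _ _).
- by move=> s t h; apply: fmap_lin.
- by move=> s h v; apply: fmap_id.
- by move=> s t u h1 h2 h3 v; apply: fmap_comp.
Defined.

Definition natural (T : Type) (le : T -> T -> Prop) (F G : pfunctor K le)
  (a : forall t, fsp F t -> fsp G t) : Prop :=
  (forall t, lin (a t)) /\
  (forall s t (h : le s t) v, a t (fmap F h v) = fmap G h (a s v)).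

Definition fiso (T : Type) (le : T -> T -> Prop) (F G : pfunctor K le) : Prop :=
  exists a : forall t, fsp F t -> fsp G t, natural a /\ forall t, bijective (a t).

Definition isLan (S T : Type) (leS : S -> S -> Prop) (leT : T -> T -> Prop)
  (f : S -> T) (mono : forall s s', leS s s' -> leT (f s) (f s'))
  (F : pfunctor K leS) (L : pfunctor K leT) : Prop :=
  exists eta : forall s, fsp F s -> fsp (restrict mono L) s,
    natural eta /\
    forall (H : pfunctor K leT) (alpha : forall s, fsp F s -> fsp (restrict mono H) s),
      natural alpha ->
      exists beta : forall t, fsp L t -> fsp H t,
        [/\ natural beta,
            (forall s v, beta (f s) (eta s v) = alpha s v) &
            (forall beta' : forall t, fsp L t -> fsp H t, natural beta' ->
               (forall s v, beta' (f s) (eta s v) = alpha s v) ->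
               forall t v, beta' t v = beta t v)].

Definition isRan (S T : Type) (leS : S -> S -> Prop) (leT : T -> T -> Prop)
  (f : S -> T) (mono : forall s s', leS s s' -> leT (f s) (f s'))
  (F : pfunctor K leS) (L : pfunctor K leT) : Prop :=
  exists eps : forall s, fsp (restrict mono L) s -> fsp F s,
    natural eps /\
    forall (H : pfunctor K leT) (alpha : forall s, fsp (restrict mono H) s -> fsp F s),
      natural alpha ->
      exists beta : forall t, fsp H t -> fsp L t,
        [/\ natural beta,
            (forall s v, eps s (beta (f s) v) = alpha s v) &
            (forall beta' : forall t, fsp H t -> fsp L t, natural beta' ->
               (forall s v, eps s (beta' (f s) v) = alpha s v) ->
               forall t v, beta' t v = beta t v)].

End Functors.

Section Modules.
Variables (K : fieldType) (R : realType) (n : nat).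

Definition pt := 'I_n -> R.

Definition lep (a b : pt) : bool := [forall i, a i <= b i].
Definition lepP (a b : pt) : Prop := lep a b.


Definition subpt (A : pt -> Prop) := {a : pt | A a}.
Definition suble (A : pt -> Prop) (x y : subpt A) : Prop := lepP (sval x) (sval y).
Definition iota_mono (A : pt -> Prop) :
  forall x y : subpt A, suble x y -> lepP (sval x) (sval y) := fun _ _ h => h.

Definition restr (A : pt -> Prop) (M : pfunctor K lepP) : pfunctor K (@suble A) :=
  restrict (@iota_mono A) M.
Definition Lan_along (A : pt -> Prop) (F : pfunctor K (@suble A)) (L : pfunctor K lepP) :=
  isLan (@iota_mono A) F L.
Definition Ran_along (A : pt -> Prop) (F : pfunctor K (@suble A)) (L : pfunctor K lepP) :=
  isRan (@iota_mono A) F L.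

(* Presentations F1 --p1--> F0 of finitely generated free graded modules:
   generators of F0 at grades gb i, of F1 at grades gr j; column j of p1 is
   sum_i coef j i * x^(gr j - gb i) e_i. *)
Record pres := Pres {
  m0 : nat; m1 : nat;
  gb : 'I_m0 -> pt; gr : 'I_m1 -> pt;
  coef : 'M[K]_(m1, m0) }.
Arguments gb : clear implicits.
Arguments gr : clear implicits.
Arguments coef : clear implicits.

Definition pres_valid (p : pres) : Prop :=
  forall j i, coef p j i != 0 -> lep (gb p i) (gr p j).

(* F0(a) is identified with the vectors of K^m0 supported on the generators
   of grade <= a; mask a is the projection onto it. *)
Definition mask (p : pres) (a : pt) (v : 'rV[K]_(m0 p)) : 'rV[K]_(m0 p) :=
  \row_i (if lep (gb p i) a then v 0 i else 0).
Arguments mask : clear implicits.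

(* M is (isomorphic to) the cokernel of the presentation p:
   there is a natural pointwise surjection F0 -> M whose kernel at each
   grade a is the image of F1(a). *)
Definition presented (M : pfunctor K lepP) (p : pres) : Prop :=
  exists pi : forall a : pt, 'rV[K]_(m0 p) -> fsp M a,
    [/\ (forall a, lin (pi a)),
        (forall a v, pi a v = pi a (mask p a v)),
        (forall a b (h : lepP a b) v, fmap M h (pi a v) = pi b (mask p a v)),
        (forall a y, exists v, pi a v = y) &
        (forall a v, mask p a v = v ->
           (pi a v = 0 <->
            exists w : 'rV[K]_(m1 p),
              (forall j, w 0 j != 0 -> lep (gr p j) a) /\ v = w *m coef p))].

(* F(M) on presentations: replace grades by their images under F *)
Definition pmerge (F : pt -> pt) (p : pres) : pres :=
  Pres (fun i => F (gb p i)) (fun j => F (gr p j)) (coef p).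

End Modules.

Notation pmodule K R n := (pfunctor K (@lepP R n)).

Section Grids.
Variables (R : realType) (n : nat) (k : 'I_n -> nat)
          (G : forall i : 'I_n, 'I_(k i) -> R).

Definition gpoint (t : forall i : 'I_n, 'I_(k i)) : pt R n := fun i => @G i (t i).

Definition supdist (a b : pt R n) : R := \big[Num.max/0]_(i < n) `|a i - b i|.

(* x < c(G), with c(G) the minimum sup-distance between distinct grid points
   (c(G) = +oo when there is at most one grid point) *)
Definition c_gt (x : R) : Prop :=
  forall t t' : forall i : 'I_n, 'I_(k i),
    gpoint t <> gpoint t' -> x < supdist (gpoint t) (gpoint t').

Definition onGrid (a : pt R n) : Prop := exists j : 'I_n, exists l : 'I_(k j), a j = @G j l.

Definition mergeP (delta : R) (a : pt R n) : pt R n := fun i =>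
  match [pick l : 'I_(k i) | (@G i l - delta <= a i) && (a i <= @G i l)] with
  | Some l => @G i l | None => a i end.

Definition mergeM (delta : R) (a : pt R n) : pt R n := fun i =>
  match [pick l : 'I_(k i) | (@G i l <= a i) && (a i <= @G i l + delta)] with
  | Some l => @G i l | None => a i end.

Definition Aplus (delta : R) (a : pt R n) : Prop := mergeP delta a = a.
Definition Aminus (delta : R) (a : pt R n) : Prop := mergeM delta a = a /\ ~ onGrid a.

End Grids.

(* Main.v *)
Require Import Defs.
From HB Require Import structures.
From mathcomp Require Import all_boot all_order all_algebra.
From mathcomp Require Import reals lra.
From Stdlib Require Import ClassicalEpsilon FunctionalExtensionality.
Set Implicit Arguments. Unset Strict Implicit. Unset Printing Implicit Defensive.
Import Order.TTheory GRing.Theory Num.Theory.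
Local Open Scope ring_scope.

Section Lin.
Variable K : fieldType.
Implicit Types U V : lmodType K.

Lemma lin0 U V (f : U -> V) : lin f -> f 0 = 0.
Proof.
move=> H; have := H 1 0 0; rewrite !scale1r addr0 => e.
by apply/(addrI (f 0)); rewrite addr0 -e.
Qed.

Lemma linD U V (f : U -> V) u v : lin f -> f (u + v) = f u + f v.
Proof. by move=> H; have := H 1 u v; rewrite !scale1r. Qed.

Lemma linZ U V (f : U -> V) c u : lin f -> f (c *: u) = c *: f u.
Proof. by move=> H; have := H c u 0; rewrite addr0 (lin0 H) addr0. Qed.

Lemma linB U V (f : U -> V) u v : lin f -> f (u - v) = f u - f v.
Proof.
move=> H; have := H (-1) v u; rewrite !scaleN1r => e.
by rewrite [u - v]addrC e [RHS]addrC.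
Qed.

Lemma lin_via (W U V : lmodType K) (pi : W -> U) (pi' : W -> V) (f : U -> V) :
  lin pi -> lin pi' -> (forall y, exists v, pi v = y) ->
  (forall v, f (pi v) = pi' v) -> lin f.
Proof.
move=> l1 l2 sur fE c u v.
have [x <-] := sur u; have [y <-] := sur v.
by rewrite -l1 !fE l2.
Qed.

Lemma lin_comp (U V W : lmodType K) (f : U -> V) (h : V -> W) :
  lin f -> lin h -> lin (fun x => h (f x)).
Proof. by move=> lf lh c u v; rewrite lf lh. Qed.

Lemma lin_id (U : lmodType K) : lin (fun x : U => x).
Proof. by []. Qed.
End Lin.

Section Pts.
Variables (R : realType) (n : nat).
Local Notation pt := (pt R n).

Definition maxpt (s t : pt) : pt := fun i => Num.max (s i) (t i).
Definition minpt (s t : pt) : pt := fun i => Num.min (s i) (t i).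

Lemma lepE (a b : pt) : lep a b = [forall i, a i <= b i].
Proof. by []. Qed.

Lemma lep_refl (a : pt) : lep a a.
Proof. by apply/forallP. Qed.

Lemma lep_trans (a b c : pt) : lep a b -> lep b c -> lep a c.
Proof.
move=> /forallP h1 /forallP h2; apply/forallP => i.
exact: le_trans (h1 i) (h2 i).
Qed.

Lemma lep_maxl (a b : pt) : lep a (maxpt a b).
Proof. by apply/forallP => i; rewrite /maxpt le_max lexx. Qed.
Lemma lep_maxr (a b : pt) : lep b (maxpt a b).
Proof. by apply/forallP => i; rewrite /maxpt le_max lexx orbT. Qed.
Lemma lep_max (a b c : pt) : lep a c -> lep b c -> lep (maxpt a b) c.
Proof.
move=> /forallP h1 /forallP h2; apply/forallP => i.
by rewrite /maxpt ge_max h1 h2.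
Qed.
Lemma lep_minl (a b : pt) : lep (minpt a b) a.
Proof. by apply/forallP => i; rewrite /minpt ge_min lexx. Qed.
Lemma lep_minr (a b : pt) : lep (minpt a b) b.
Proof. by apply/forallP => i; rewrite /minpt ge_min lexx orbT. Qed.
Lemma lep_min (a b c : pt) : lep c a -> lep c b -> lep c (minpt a b).
Proof.
move=> /forallP h1 /forallP h2; apply/forallP => i.
by rewrite /minpt le_min h1 h2.
Qed.
End Pts.

Section Pi.
Variables (K : fieldType) (R : realType) (n : nat).
Local Notation pt := (pt R n).

Definition gmask m (g : 'I_m -> pt) (a : pt) (v : 'rV[K]_m) : 'rV[K]_m :=
  \row_i (if lep (g i) a then v 0 i else 0).

Definition ispi (M : pmodule K R n) m0 m1 (g : 'I_m0 -> pt) (r : 'I_m1 -> pt)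
  (C : 'M[K]_(m1, m0)) (pi : forall a, 'rV[K]_m0 -> fsp M a) : Prop :=
 [/\ (forall a, lin (pi a)),
     (forall a v, pi a v = pi a (gmask g a v)),
     (forall a b (h : lepP a b) v, Defs.fmap M h (pi a v) = pi b (gmask g a v)),
     (forall a y, exists v, pi a v = y) &
     (forall a v, gmask g a v = v ->
        (pi a v = 0 <-> exists w : 'rV[K]_m1,
            (forall j, w 0 j != 0 -> lep (r j) a) /\ v = w *m C))].

Arguments ispi M [m0 m1] g r C pi.

Lemma presentedE (M : pmodule K R n) m0 m1 (g : 'I_m0 -> pt) (r : 'I_m1 -> pt) C :
  presented M (Pres g r C) -> exists pi, ispi M g r C pi.
Proof. by []. Qed.

Lemma gmask_idem m (g : 'I_m -> pt) a v : gmask g a (gmask g a v) = gmask g a v.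
Proof. by apply/rowP => i; rewrite !mxE; case: (lep (g i) a). Qed.

Lemma gmaskB m (g : 'I_m -> pt) a v w : gmask g a (v - w) = gmask g a v - gmask g a w.
Proof. by apply/rowP => i; rewrite !mxE; case: ifP => _; rewrite ?subr0. Qed.

Lemma gmask_ext m (g1 g2 : 'I_m -> pt) a b v :
  (forall i, lep (g1 i) a = lep (g2 i) b) -> gmask g1 a v = gmask g2 b v.
Proof. by move=> e; apply/rowP => i; rewrite !mxE e. Qed.

Lemma transfer (M N : pmodule K R n) m0 m1 (g1 g2 : 'I_m0 -> pt) (r1 r2 : 'I_m1 -> pt)
  C piM piN a b :
  ispi M g1 r1 C piM -> ispi N g2 r2 C piN ->
  (forall i, lep (g1 i) a = lep (g2 i) b) -> (forall j, lep (r1 j) a = lep (r2 j) b) ->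
  forall v v', piM a v = piM a v' -> piN b v = piN b v'.
Proof.
case=> l1 m1E _ _ k1 [l2 m2E _ _ k2] eg er v v' e.
have e0 : piM a (gmask g1 a (v - v')) = 0 by rewrite -m1E (linB _ _ (l1 a)) e subrr.
have [w [hw ew]] := (k1 a _ (gmask_idem _ _ _)).1 e0.
have e1 : piN b (gmask g2 b (v - v')) = 0.
  apply/(k2 b _ (gmask_idem _ _ _)).2; exists w; split.
    by move=> j /hw; rewrite er.
  by rewrite -ew; apply: gmask_ext => i; rewrite eg.
by apply/eqP; rewrite -subr_eq0 -(linB _ _ (l2 b)) m2E e1.
Qed.
End Pi.
Arguments ispi [K R n] M [m0 m1] g r C pi.

Section Fm.
Variables (K : fieldType) (R : realType) (n : nat).
Lemma fmapC (F : pmodule K R n) a b c (h1 : lepP a b) (h2 : lepP b c) (h3 : lepP a c) v :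
  Defs.fmap F h2 (Defs.fmap F h1 v) = Defs.fmap F h3 v.
Proof. by symmetry; apply: fmap_comp. Qed.
Lemma lepP_trans (a b c : pt R n) : lepP a b -> lepP b c -> lepP a c.
Proof. exact: lep_trans. Qed.
Lemma fmapCI (F : pmodule K R n) a b b' c (h1 : lepP a b) (h2 : lepP b c)
  (h1' : lepP a b') (h2' : lepP b' c) v :
  Defs.fmap F h2 (Defs.fmap F h1 v) = Defs.fmap F h2' (Defs.fmap F h1' v).
Proof.
by rewrite (fmapC h1 h2 (lepP_trans h1 h2)) (fmapC h1' h2' (lepP_trans h1 h2)).
Qed.
End Fm.
Arguments fmapCI [K R n] F [a b b' c] h1 h2 h1' h2' v.
Arguments fmapC [K R n] F [a b c] h1 h2 h3 v.


Section LanAbs.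
Variables (K : fieldType) (R : realType) (n : nat).
Local Notation pt := (pt R n).
Variables (m0 m1 : nat) (g g' : 'I_m0 -> pt) (r r' : 'I_m1 -> pt) (C : 'M[K]_(m1,m0)).
Variables (M MP : pmodule K R n) (piM : forall a, 'rV[K]_m0 -> fsp M a)
  (piP : forall a, 'rV[K]_m0 -> fsp MP a).
Hypotheses (HM : ispi M g r C piM) (HP : ispi MP g' r' C piP).
Variable A : pt -> Prop.
Hypothesis hAg : forall s, A s -> forall i, lep (g' i) s = lep (g i) s.
Hypothesis hAr : forall s, A s -> forall j, lep (r' j) s = lep (r j) s.
Definition goodL a s := [/\ lep s a, (forall i, lep (g' i) a -> lep (g' i) s) &
   (forall j, lep (r' j) a -> lep (r' j) s)].
Hypothesis hgood : forall a, exists s : subpt A, goodL a (sval s).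
Hypothesis hmax : forall s t, A s -> A t -> A (maxpt s t).

Lemma lan_abs : isLan (@iota_mono R n A) (restr A M) MP.
Proof.
case: (HM) => lM mM fM sM kM; case: (HP) => lP mP fP sP kP.
pose sel a := proj1_sig (constructive_indefinite_description _ (hgood a)).
have selP a : goodL a (sval (sel a)) := proj2_sig (constructive_indefinite_description _ (hgood a)).
have liftM_ex a y : exists v, piM a v == y by have [v e] := sM a y; exists v; apply/eqP.
pose liftM a y := xchoose (liftM_ex a y).
have liftMP a y : piM a (liftM a y) = y := eqP (xchooseP (liftM_ex a y)).
have liftP_ex a y : exists v, piP a v == y by have [v e] := sP a y; exists v; apply/eqP.
pose liftP a y := xchoose (liftP_ex a y).
have liftPP a y : piP a (liftP a y) = y := eqP (xchooseP (liftP_ex a y)).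
have geqA (s : subpt A) i : lep (g i) (sval s) = lep (g' i) (sval s) by rewrite hAg //; exact: (proj2_sig s).
have reqA (s : subpt A) j : lep (r j) (sval s) = lep (r' j) (sval s) by rewrite hAr //; exact: (proj2_sig s).
pose eta (s : subpt A) (y : fsp M (sval s)) : fsp MP (sval s) := piP (sval s) (liftM (sval s) y).
have etaE (s : subpt A) v : eta s (piM (sval s) v) = piP (sval s) v.
  by apply: (transfer HM HP (geqA s) (reqA s)); rewrite liftMP.
clearbody eta.
exists eta; split.
  split.
    move=> s; apply: (lin_via (lM (sval s)) (lP (sval s)) (sM (sval s))) => v.
    exact: etaE.
  move=> s t h y; have [v <-] := sM (sval s) y.
  rewrite /= fM !etaE fP; congr (piP _ _).
  by apply: gmask_ext => i; rewrite geqA.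
move=> H alpha [lA nA].
have nA' (s t : subpt A) (h : lepP (sval s) (sval t)) x :
    alpha t (Defs.fmap M h x) = Defs.fmap H h (alpha s x) := nA s t h x.
have selle a : lepP (sval (sel a)) a by case: (selP a).
have gd a i : lep (g' i) a = lep (g' i) (sval (sel a)).
  case: (selP a) => le hg _; apply/idP/idP; first exact: hg.
  by move=> h; apply: lep_trans h le.
have rd a j : lep (r' j) a = lep (r' j) (sval (sel a)).
  case: (selP a) => le _ hr; apply/idP/idP; first exact: hr.
  by move=> h; apply: lep_trans h le.
pose beta a (y : fsp MP a) : fsp H a :=
  Defs.fmap H (selle a) (alpha (sel a) (piM (sval (sel a)) (liftP a y))).
have betaE a v : beta a (piP a v) =
    Defs.fmap H (selle a) (alpha (sel a) (piM (sval (sel a)) v)).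
  rewrite /beta; congr (Defs.fmap H _ (alpha _ _)).
  apply: (transfer HP HM _ _); last exact: liftPP.
    by move=> i; rewrite gd geqA.
  by move=> j; rewrite rd reqA.
clearbody beta.
exists beta; split.
- split.
    move=> a; apply: (lin_via (lP a) _ (sP a) (betaE a)).
    by move=> c u w; rewrite lM lA fmap_lin.
  move=> a b h y; have [v <-] := sP a y.
  rewrite fP !betaE.
  set sa := sel a; set sb := sel b.
  have Au : A (maxpt (sval sa) (sval sb)) by apply: hmax; [exact: (proj2_sig sa)|exact: (proj2_sig sb)].
  pose u : subpt A := exist _ _ Au.
  have hus : lepP (sval sa) (sval u) by exact: lep_maxl.
  have htu : lepP (sval sb) (sval u) by exact: lep_maxr.
  have hub : lepP (sval u) b.
    by apply: lep_max; [exact: lep_trans (selle a) h| exact: selle b].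
  rewrite (fmapC H (selle a) h (lepP_trans hus hub)).
  rewrite -(fmapC H hus hub) -(fmapC H htu hub) -!nA' !fM.
  congr (Defs.fmap H _ (alpha _ _)).
  rewrite mM [RHS]mM; congr (piM _ _); apply/rowP => i; rewrite !mxE.
  rewrite (geqA sa) -(gd a) (geqA sb) -(gd b).
  case E: (lep (g' i) a); last by case: ifP => //; case: ifP.
  have -> : lep (g' i) b by exact: lep_trans E h.
  suff -> : lep (g i) (sval u) by [].
  by apply: lep_trans hus; rewrite geqA -gd.
- move=> s y; have [x <-] := sM (sval s) y.
  rewrite etaE betaE -nA' fM.
  congr (alpha _ _); rewrite mM [RHS]mM; congr (piM _ _); apply/rowP => i; rewrite !mxE.
  case E: (lep (g i) (sval s)) => //.
  by rewrite (geqA (sel (sval s))) -(gd (sval s)) -(geqA s) E.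
- move=> beta' [lB nB] hB a y; have [v <-] := sP a y.
  rewrite betaE.
  have e : piP a v = Defs.fmap MP (selle a) (piP (sval (sel a)) v).
    rewrite fP mP [RHS]mP; congr (piP _ _); apply/rowP => i; rewrite !mxE -(gd a).
    by case: (lep (g' i) a).
  by rewrite e nB -(etaE (sel a) v) hB.
Qed.
End LanAbs.


Section RanAbs.
Variables (K : fieldType) (R : realType) (n : nat).
Local Notation pt := (pt R n).
Variables (m0 m1 : nat) (g g' : 'I_m0 -> pt) (r r' : 'I_m1 -> pt) (C : 'M[K]_(m1,m0)).
Variables (M MM : pmodule K R n) (piM : forall a, 'rV[K]_m0 -> fsp M a)
  (piMM : forall a, 'rV[K]_m0 -> fsp MM a).
Hypotheses (HM : ispi M g r C piM) (HMM : ispi MM g' r' C piMM).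
Variable A : pt -> Prop.
Hypothesis hAg : forall s, A s -> forall i, lep (g' i) s = lep (g i) s.
Hypothesis hAr : forall s, A s -> forall j, lep (r' j) s = lep (r j) s.
Definition goodR a s := [/\ lep a s, (forall i, lep (g' i) s -> lep (g' i) a) &
   (forall j, lep (r' j) s -> lep (r' j) a)].
Hypothesis hgood : forall a, exists s : subpt A, goodR a (sval s).
Hypothesis hmin : forall s t, A s -> A t -> A (minpt s t).

Lemma ran_abs : isRan (@iota_mono R n A) (restr A M) MM.
Proof.
case: (HM) => lM mM fM sM kM; case: (HMM) => lP mP fP sP kP.
pose sel a := proj1_sig (constructive_indefinite_description _ (hgood a)).
have selP a : goodR a (sval (sel a)) := proj2_sig (constructive_indefinite_description _ (hgood a)).
have liftM_ex a y : exists v, piM a v == y by have [v e] := sM a y; exists v; apply/eqP.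
pose liftM a y := xchoose (liftM_ex a y).
have liftMP a y : piM a (liftM a y) = y := eqP (xchooseP (liftM_ex a y)).
have liftP_ex a y : exists v, piMM a v == y by have [v e] := sP a y; exists v; apply/eqP.
pose liftP a y := xchoose (liftP_ex a y).
have liftPP a y : piMM a (liftP a y) = y := eqP (xchooseP (liftP_ex a y)).
have geqA (s : subpt A) i : lep (g i) (sval s) = lep (g' i) (sval s) by rewrite hAg //; exact: (proj2_sig s).
have reqA (s : subpt A) j : lep (r j) (sval s) = lep (r' j) (sval s) by rewrite hAr //; exact: (proj2_sig s).
pose eps (s : subpt A) (y : fsp MM (sval s)) : fsp M (sval s) := piM (sval s) (liftP (sval s) y).
have epsE (s : subpt A) v : eps s (piMM (sval s) v) = piM (sval s) v.
  by apply: (transfer HMM HM (fun i => esym (geqA s i)) (fun j => esym (reqA s j))); rewrite liftPP.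
clearbody eps.
exists eps; split.
  split.
    move=> s; apply: (lin_via (lP (sval s)) (lM (sval s)) (sP (sval s))) => v.
    exact: epsE.
  move=> s t h y; have [v <-] := sP (sval s) y.
  rewrite /= fP !epsE fM; congr (piM _ _).
  by apply: gmask_ext => i; rewrite geqA.
move=> H alpha [lA nA].
have nA' (s t : subpt A) (h : lepP (sval s) (sval t)) x :
    alpha t (Defs.fmap H h x) = Defs.fmap M h (alpha s x) := nA s t h x.
have selge a : lepP a (sval (sel a)) by case: (selP a).
have gd a i : lep (g' i) a = lep (g' i) (sval (sel a)).
  case: (selP a) => le hg _; apply/idP/idP; last exact: hg.
  by move=> h; apply: lep_trans h le.
have rd a j : lep (r' j) a = lep (r' j) (sval (sel a)).
  case: (selP a) => le _ hr; apply/idP/idP; last exact: hr.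
  by move=> h; apply: lep_trans h le.
pose beta a (y : fsp H a) : fsp MM a :=
  piMM a (liftM (sval (sel a)) (alpha (sel a) (Defs.fmap H (selge a) y))).
have betaE a y w : piM (sval (sel a)) w = alpha (sel a) (Defs.fmap H (selge a) y) ->
    beta a y = piMM a w.
  move=> ew; rewrite /beta.
  apply: (transfer HM HMM (fun i => etrans (geqA (sel a) i) (esym (gd a i)))
                          (fun j => etrans (reqA (sel a) j) (esym (rd a j)))).
  by rewrite liftMP ew.
clearbody beta.
exists beta; split.
- split.
    move=> a c y y'.
    have [w ew] := sM (sval (sel a)) (alpha (sel a) (Defs.fmap H (selge a) y)).
    have [w' ew'] := sM (sval (sel a)) (alpha (sel a) (Defs.fmap H (selge a) y')).
    rewrite (betaE _ _ _ ew) (betaE _ _ _ ew') (betaE _ (c *: y + y') (c *: w + w')) ?lP //.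
    by rewrite lM ew ew' fmap_lin lA.
  move=> a b h y.
  set sa := sel a; set sb := sel b.
  have Au : A (minpt (sval sa) (sval sb)) by apply: hmin; [exact: (proj2_sig sa)|exact: (proj2_sig sb)].
  pose u : subpt A := exist _ _ Au.
  have hus : lepP (sval u) (sval sa) by exact: lep_minl.
  have hut : lepP (sval u) (sval sb) by exact: lep_minr.
  have hau : lepP a (sval u).
    by apply: lep_min; [exact: selge a| exact: lep_trans h (selge b)].
  have [w3 e3] := sM (sval u) (alpha u (Defs.fmap H hau y)).
  have E1 : beta b (Defs.fmap H h y) = piMM b (gmask g (sval u) w3).
    apply: betaE; rewrite -(fM _ _ hut) e3 -nA'.
    by congr (alpha _ _); apply: fmapCI.
  have E2 : beta a y = piMM a (gmask g (sval u) w3).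
    apply: betaE; rewrite -(fM _ _ hus) e3 -nA'.
    by congr (alpha _ _); rewrite (fmapC H hau hus (selge a)).
  rewrite E1 E2 fP; congr (piMM _ _); apply/rowP => i; rewrite !mxE.
  case E: (lep (g i) (sval u)); last by case: (lep (g' i) a).
  suff -> : lep (g' i) a by [].
  rewrite gd; apply: lep_trans hus; by rewrite -geqA.
- move=> s y.
  have [w ew] := sM (sval (sel (sval s))) (alpha (sel (sval s)) (Defs.fmap H (selge (sval s)) y)).
  rewrite (betaE _ _ _ ew) epsE.
  have [x ex] := sM (sval s) (alpha s y).
  rewrite -ex [RHS]mM.
  have eg i : lep (g i) (sval (sel (sval s))) = lep (g i) (sval s).
    by rewrite (geqA (sel (sval s))) (geqA s) -gd.
  have er j : lep (r j) (sval (sel (sval s))) = lep (r j) (sval s).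
    by rewrite (reqA (sel (sval s))) (reqA s) -rd.
  apply: (transfer HM HM eg er).
  by rewrite ew nA' -ex fM.
- move=> beta' [lB nB] hB a y; have [z ez] := sP a (beta' a y).
  rewrite -ez; symmetry; rewrite mP; apply: betaE.
  by rewrite -hB nB -ez fP epsE.
Qed.
End RanAbs.


Section Gap.
Variable R : realType.
Lemma gapL (cs : seq R) hi : exists2 e, 0 < e & forall z, z \in cs -> z < hi -> z < hi - e.
Proof.
elim: cs => [|z cs [e e0 he]]; first by exists 1.
case: (ltP z hi) => hz.
  have h0 : 0 < (hi - z) / 2 by rewrite divr_gt0 // subr_gt0.
  exists (Num.min e ((hi - z) / 2)); first by rewrite lt_min e0 h0.
  have m1 : Num.min e ((hi - z) / 2) <= e by rewrite ge_min lexx.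
  have m2 : Num.min e ((hi - z) / 2) <= (hi - z) / 2 by rewrite ge_min lexx orbT.
  move=> z'; rewrite inE => /orP [/eqP -> _| hz' hlt]; first by lra.
  by have := he _ hz' hlt; lra.
exists e => // z'; rewrite inE => /orP [/eqP -> h|]; first by lra.
exact: he.
Qed.

Lemma gapR (cs : seq R) lo : exists2 e, 0 < e & forall z, z \in cs -> lo < z -> lo + e < z.
Proof.
have [e e0 he] := gapL [seq - x | x <- cs] (- lo).
exists e => // z hz hlt.
have := he (- z) (map_f _ hz); rewrite ltrN2 => /(_ hlt); lra.
Qed.
End Gap.

Section Grid.
Variables (R : realType) (n : nat) (k : 'I_n -> nat) (G : forall i : 'I_n, 'I_(k i) -> R)
  (delta : R).
Hypothesis hk : forall i, (0 < k i)%N.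
Hypothesis hc : c_gt G (2 * delta).

Lemma sep i (l l' : 'I_(k i)) : @G i l != @G i l' ->
  2 * delta < @G i l - @G i l' \/ 2 * delta < @G i l' - @G i l.
Proof.
move=> ne.
pose t0 j : 'I_(k j) := Ordinal (hk j).
pose t (l0 : 'I_(k i)) j : 'I_(k j) := if j == i then insubd (t0 j) (val l0) else t0 j.
have ti l0 : t l0 i = l0 by apply: val_inj; rewrite /t eqxx val_insubd ltn_ord.
have tj l0 j : j != i -> t l0 j = t0 j by move=> /negbTE h; rewrite /t h.
have lt : 2 * delta < supdist (gpoint G (t l)) (gpoint G (t l')).
  apply: hc => e; have := congr1 (fun f => f i) e; rewrite /gpoint /= !ti => h.
  by move: ne; rewrite h eqxx.
have H : supdist (gpoint G (t l)) (gpoint G (t l')) <= `|@G i l - @G i l'|.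
  rewrite /supdist; apply: (big_ind (fun x => x <= `|@G i l - @G i l'|)).
  - exact: normr_ge0.
  - by move=> x y hx hy; rewrite ge_max hx hy.
  - move=> j _; rewrite /gpoint; case: (eqVneq j i) => [-> | h]; first by rewrite !ti.
    by rewrite !tj // subrr normr0.
have := lt_le_trans lt H.
case: (lerP 0 (@G i l - @G i l')) => h; [rewrite ger0_norm // | rewrite ltr0_norm //];
  move=> h'; [left|right]; lra.
Qed.

Definition notbadP i (x : R) := forall l : 'I_(k i), ~ ((@G i l - delta <= x) && (x < @G i l)).

Lemma mergeP_ge a i : a i <= mergeP G delta a i.
Proof. by rewrite /mergeP; case: pickP => [l /andP[_ h]|_]. Qed.

Lemma mergeP_notbad a i : notbadP i (mergeP G delta a i).
Proof.
move=> l /andP [h1 h2]; move: h1 h2; rewrite /mergeP; case: pickP => [l0 _|none] h1 h2.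
  have ne : @G i l != @G i l0 by rewrite gt_eqF.
  by have := sep ne; lra.
by have := none l; rewrite h1 /= (ltW h2).
Qed.

Lemma P1coord a (s : pt R n) i : notbadP i (s i) ->
  (mergeP G delta a i <= s i) = (a i <= s i).
Proof.
move=> ns; apply/idP/idP; first by apply: le_trans (mergeP_ge a i).
rewrite /mergeP; case: pickP => [l /andP[h1 h2] | _] // h.
rewrite leNgt; apply/negP => h3; apply: (ns l); by rewrite (le_trans h1 h) h3.
Qed.

Lemma Aplus_notbad s : Aplus G delta s -> forall i, notbadP i (s i).
Proof. by move=> e i; rewrite -e; exact: mergeP_notbad. Qed.

Lemma notbad_Aplus s : (forall i, notbadP i (s i)) -> Aplus G delta s.
Proof.
move=> h; apply: functional_extensionality => i; rewrite /mergeP.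
case: pickP => [l /andP[h1 h2]|] //.
apply/eqP; rewrite eq_le h2 andbT leNgt; apply/negP => h3.
by apply: (h i l); rewrite h1 h3.
Qed.

Lemma Aplus_lep s x : Aplus G delta s -> lep (mergeP G delta x) s = lep x s.
Proof.
move=> As; apply: eq_forallb => i; apply: P1coord; exact: Aplus_notbad.
Qed.

Lemma Aplus_max s t : Aplus G delta s -> Aplus G delta t -> Aplus G delta (maxpt s t).
Proof.
move=> As At; apply: notbad_Aplus => i; rewrite /maxpt.
by case: leP => _; exact: Aplus_notbad.
Qed.

Lemma memG i (cs : seq R) (l : 'I_(k i)) : @G i l \in cs ++ [seq @G i l | l <- enum 'I_(k i)].
Proof. by rewrite mem_cat map_f ?orbT // mem_enum. Qed.

Lemma coordP i (cs : seq R) x : (forall c, c \in cs -> notbadP i c) ->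
  exists y, [/\ y <= x, notbadP i y & forall c, c \in cs -> c <= x -> c <= y].
Proof.
move=> nb.
case: (boolP [exists l, (@G i l - delta <= x) && (x < @G i l)]); last first.
  move=> hn; exists x; split => // l hl.
  by move/existsPn: hn => /(_ l); rewrite hl.
case/existsP => l0 /andP [h1 h2].
have [e e0 he] := gapL (cs ++ [seq @G i l | l <- enum 'I_(k i)]) (@G i l0 - delta).
exists (@G i l0 - delta - e); split.
- lra.
- move=> l /andP [h3 h4].
  case: (ltP (@G i l) (@G i l0 - delta)) => h5.
    by have := he _ (memG cs l) h5; lra.
  case: (eqVneq (@G i l) (@G i l0)) => h6; first by lra.
  by have := sep h6; lra.
- move=> c hcm hcx.
  have hc' : c \in cs ++ [seq @G i l | l <- enum 'I_(k i)] by rewrite mem_cat hcm.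
  case: (ltP c (@G i l0 - delta)) => h5; first by have := he _ hc' h5; lra.
  exfalso; apply: (nb c hcm l0); rewrite h5 /=; exact: le_lt_trans hcx h2.
Qed.

Lemma goodP m0 m1 (g : 'I_m0 -> pt R n) (r : 'I_m1 -> pt R n) a :
  exists s : subpt (Aplus G delta),
    goodL (fun j => mergeP G delta (g j)) (fun j => mergeP G delta (r j)) a (sval s).
Proof.
pose cs i := [seq mergeP G delta (g j) i | j <- enum 'I_m0] ++
             [seq mergeP G delta (r j) i | j <- enum 'I_m1].
have nbcs i c : c \in cs i -> notbadP i c.
  by rewrite mem_cat => /orP [] /mapP [j _ ->]; exact: mergeP_notbad.
have ex i := coordP (a i) (nbcs i).
pose s i := proj1_sig (constructive_indefinite_description _ (ex i)).
have sP i : [/\ s i <= a i, notbadP i (s i) &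
    forall c, c \in cs i -> c <= a i -> c <= s i] :=
  proj2_sig (constructive_indefinite_description _ (ex i)).
have As : Aplus G delta s by apply: notbad_Aplus => i; case: (sP i).
exists (exist _ s As); split => /=.
- by apply/forallP => i; case: (sP i).
- move=> j /forallP h; apply/forallP => i; case: (sP i) => _ _; apply; last exact: h i.
  by rewrite mem_cat; apply/orP; left; apply/mapP; exists j; rewrite ?mem_enum.
- move=> j /forallP h; apply/forallP => i; case: (sP i) => _ _; apply; last exact: h i.
  by rewrite mem_cat; apply/orP; right; apply/mapP; exists j; rewrite ?mem_enum.
Qed.

Definition okM i (x : R) := forall l : 'I_(k i),
  ~ ((@G i l <= x) && (x <= @G i l + delta)) /\ x <> @G i l.
Definition Qm i (c : R) := (exists l, c = @G i l) \/
  (forall l : 'I_(k i), ~ ((@G i l <= c) && (c <= @G i l + delta))).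

Lemma mergeM_le a i : mergeM G delta a i <= a i.
Proof. by rewrite /mergeM; case: pickP => [l /andP[h _]|_]. Qed.

Lemma mergeM_Q a i : Qm i (mergeM G delta a i).
Proof.
rewrite /mergeM; case: pickP => [l _|none]; first by left; exists l.
by right => l; have := none l => /negP.
Qed.

Lemma M1coord a (s : pt R n) i : okM i (s i) ->
  (mergeM G delta a i <= s i) = (a i <= s i).
Proof.
move=> ok; apply/idP/idP; last by apply: le_trans (mergeM_le a i).
rewrite /mergeM; case: pickP => [l /andP[h1 h2] | _] // h.
rewrite leNgt; apply/negP => h3; apply: (ok l).1.
by rewrite h /= (le_trans (ltW h3) h2).
Qed.

Lemma Aminus_okM s : Aminus G delta s -> forall i, okM i (s i).
Proof.
case=> e ng i l; split.
- move=> h; apply: ng; exists i.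
  move: e => /(congr1 (fun f => f i)); rewrite /mergeM.
  case: pickP => [l' _ <-| none _]; first by exists l'.
  by have := none l; rewrite h.
- by move=> h; apply: ng; exists i, l.
Qed.

Lemma okM_Aminus s : (forall i, okM i (s i)) -> Aminus G delta s.
Proof.
move=> h; split.
  apply: functional_extensionality => i; rewrite /mergeM.
  case: pickP => [l hl|] //; exfalso; exact: (h i l).1 hl.
by case=> i [l e]; exact: (h i l).2 e.
Qed.

Lemma Aminus_lep s x : Aminus G delta s -> lep (mergeM G delta x) s = lep x s.
Proof.
move=> As; apply: eq_forallb => i; apply: M1coord; exact: Aminus_okM.
Qed.

Lemma Aminus_min s t : Aminus G delta s -> Aminus G delta t -> Aminus G delta (minpt s t).
Proof.
move=> As At; apply: okM_Aminus => i; rewrite /minpt.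
by case: leP => _; exact: Aminus_okM.
Qed.

Lemma coordM i (cs : seq R) x : (forall c, c \in cs -> Qm i c) ->
  exists y, [/\ x <= y, okM i y & forall c, c \in cs -> c <= y -> c <= x].
Proof.
move=> qc.
case: (boolP [exists l, (@G i l <= x) && (x <= @G i l + delta)]); last first.
  move=> hn.
  have [e e0 he] := gapR (cs ++ [seq @G i l | l <- enum 'I_(k i)]) x.
  exists (x + e); split.
  - lra.
  - move=> l; split.
      move=> /andP [h3 h4].
      case: (ltP x (@G i l)) => h5; first by have := he _ (memG cs l) h5; lra.
      by move/existsPn: hn => /(_ l); rewrite h5 /= -ltNge => h6; lra.
    move=> h3; case: (ltP x (@G i l)) => h5; last by lra.
    by have := he _ (memG cs l) h5; lra.
  - move=> c hcm hcy; rewrite leNgt; apply/negP => h5.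
    have hm : c \in cs ++ [seq @G i l | l <- enum 'I_(k i)] by rewrite mem_cat hcm.
    by have := he c hm h5; lra.
case/existsP => l0 /andP [h1 h2].
have [e e0 he] := gapR (cs ++ [seq @G i l | l <- enum 'I_(k i)]) (@G i l0 + delta).
have P1 l : ~ ((@G i l <= @G i l0 + delta + e) && (@G i l0 + delta + e <= @G i l + delta)).
  move=> /andP [h3 h4].
  case: (ltP (@G i l0 + delta) (@G i l)) => h5.
    by have := he _ (memG cs l) h5; lra.
  case: (eqVneq (@G i l) (@G i l0)) => h6; first by lra.
  by have := sep h6; lra.
exists (@G i l0 + delta + e); split.
- lra.
- move=> l; split; first exact: P1.
  move=> h3; apply: (P1 l); rewrite -h3 lexx /=; lra.
- move=> c hcm hcy.
  have hm : c \in cs ++ [seq @G i l | l <- enum 'I_(k i)] by rewrite mem_cat hcm.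
  case: (ltP (@G i l0 + delta) c) => h5.
    by have := he c hm h5; lra.
  rewrite leNgt; apply/negP => h6.
  case: (qc c hcm) => [[l' el'] | nq].
    rewrite el' in h5 h6.
    have h7 : @G i l' != @G i l0 by rewrite gt_eqF //; exact: le_lt_trans h1 h6.
    by have := sep h7; lra.
  by apply: (nq l0); rewrite (le_trans h1 (ltW h6)) h5.
Qed.

Lemma goodM m0 m1 (g : 'I_m0 -> pt R n) (r : 'I_m1 -> pt R n) a :
  exists s : subpt (Aminus G delta),
    goodR (fun j => mergeM G delta (g j)) (fun j => mergeM G delta (r j)) a (sval s).
Proof.
pose cs i := [seq mergeM G delta (g j) i | j <- enum 'I_m0] ++
             [seq mergeM G delta (r j) i | j <- enum 'I_m1].
have qcs i c : c \in cs i -> Qm i c.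
  by rewrite mem_cat => /orP [] /mapP [j _ ->]; exact: mergeM_Q.
have ex i := coordM (a i) (qcs i).
pose s i := proj1_sig (constructive_indefinite_description _ (ex i)).
have sP i : [/\ a i <= s i, okM i (s i) &
    forall c, c \in cs i -> c <= s i -> c <= a i] :=
  proj2_sig (constructive_indefinite_description _ (ex i)).
have As : Aminus G delta s by apply: okM_Aminus => i; case: (sP i).
exists (exist _ s As); split => /=.
- by apply/forallP => i; case: (sP i).
- move=> j /forallP h; apply/forallP => i; case: (sP i) => _ _; apply; last exact: h i.
  by rewrite mem_cat; apply/orP; left; apply/mapP; exists j; rewrite ?mem_enum.
- move=> j /forallP h; apply/forallP => i; case: (sP i) => _ _; apply; last exact: h i.
  by rewrite mem_cat; apply/orP; right; apply/mapP; exists j; rewrite ?mem_enum.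
Qed.
End Grid.


Lemma fiso_refl (K : fieldType) (R : realType) (n : nat) (F : pmodule K R n) : fiso F F.
Proof.
exists (fun t (v : fsp F t) => v); split; last by move=> t; exists id.
by split => // t; exact: lin_id.
Qed.

Theorem mainTheorem8 (K : fieldType) (R : realType) (n : nat) (k : 'I_n -> nat)
  (G : forall i : 'I_n, 'I_(k i) -> R) (delta : R) :
  (forall i, (0 < k i)%N) ->
  c_gt G (2 * delta) ->
  forall p : pres K R n, pres_valid p ->
  forall M : pmodule K R n, presented M p ->
  (forall MP : pmodule K R n, presented MP (pmerge (mergeP G delta) p) ->
     exists L : pmodule K R n,
       Lan_along (restr (Aplus G delta) M) L /\ fiso MP L) /\
  (forall MM : pmodule K R n, presented MM (pmerge (mergeM G delta) p) ->
     exists L : pmodule K R n,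
       Ran_along (restr (Aminus G delta) M) L /\ fiso MM L).
Proof.
move=> hk hc [m0 m1 g r C] _ M [piM HM].
have HM' : ispi M g r C piM := HM.
split.
- move=> MP [piP HP].
  have HP' : ispi MP (fun i => mergeP G delta (g i)) (fun j => mergeP G delta (r j)) C piP := HP.
  exists MP; split; last exact: fiso_refl.
  apply: (lan_abs HM' HP').
  + by move=> s As i; apply: Aplus_lep.
  + by move=> s As j; apply: Aplus_lep.
  + by move=> a; apply: goodP.
  + by move=> s t; apply: Aplus_max.
- move=> MM [piMM HMM].
  have HMM' : ispi MM (fun i => mergeM G delta (g i)) (fun j => mergeM G delta (r j)) C piMM := HMM.
  exists MM; split; last exact: fiso_refl.
  apply: (ran_abs HM' HMM').
  + by move=> s As i; apply: Aminus_lep.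
  + by move=> s As j; apply: Aminus_lep.
  + by move=> a; apply: (goodM hk hc).
  + by move=> s t; apply: Aminus_min.
Qed.
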